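(* Let $A\in\mathbb{R}^{p\times n}$ satisfy $A\mathbf{1}=\mathbf{0}$ and let $K\ge 1$ be an integer. Put $\beta=-\min_{i,j}(A^TA)_{ij}$, $\tilde A=\begin{bmatrix}\sqrt{\beta}\,\mathbf{1}^T\\ A\end{bmatrix}$, $W=\tilde A^T\tilde A$ and $L=\operatorname{diag}(W\mathbf{1})-W$. Then the K-means problem $$\min_{D\in\mathbb{R}^{p\times K},\,X}\|A-DX\|_F^2\quad\text{s.t. }X\in\mathcal{H}$$ and the ratio-cut problem $$\min_{X}\operatorname{tr}\{XLX^T\}\quad\text{s.t. }X\in\mathcal{H}$$ have the same solutions $X$.
   Context: $\mathbf{1}$ is the all-ones vector and $\operatorname{diag}(v)$ the diagonal matrix with diagonal $v$. $\mathcal{F}$ is the set of indicator matrices $F\in\{0,1\}^{K\times n}$ in which every column has exactly one entry equal to $1$ (row $k$ indicates membership of the samples in cluster $C_k$, of size $n_k=F_kF_k^T$, assumed nonzero). $\mathcal{H}=\{(FF^T)^{-1/2}F: F\in\mathcal{F}\}$ is the set of normalized indicator matrices (row $k$ equals $F_k/\sqrt{n_k}$). *)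

(* Defs.v *)
From mathcomp Require Import all_boot all_order all_algebra.
From mathcomp Require Import reals.
Set Implicit Arguments. Unset Strict Implicit. Unset Printing Implicit Defensive.
Import Order.TTheory GRing.Theory Num.Theory.
Local Open Scope ring_scope.

Section Defs.
Variable R : realType.

Definition frob2 (m n : nat) (M : 'M[R]_(m, n)) : R :=
  \sum_(i < m) \sum_(j < n) M i j ^+ 2.

Definition ones (n : nat) : 'cV[R]_n := const_mx 1.

Definition is_indicator (K n : nat) (F : 'M[R]_(K, n)) : Prop :=
  (forall k i, F k i = 0 \/ F k i = 1) /\ (forall i, \sum_(k < K) F k i = 1).

Definition csize (K n : nat) (F : 'M[R]_(K, n)) (k : 'I_K) : R :=
  (row k F *m (row k F)^T) 0 0.

(* normalized indicator matrix (FF^T)^{-1/2} F; FF^T = diag(n_k) *)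
Definition normalized_of (K n : nat) (F : 'M[R]_(K, n)) : 'M[R]_(K, n) :=
  \matrix_(k, i) (F k i / Num.sqrt (csize F k)).

Definition inH (K n : nat) (X : 'M[R]_(K, n)) : Prop :=
  exists F : 'M[R]_(K, n), is_indicator F /\ (forall k, csize F k != 0)
                           /\ X = normalized_of F.

Definition kmeans_sol (p n K : nat) (A : 'M[R]_(p, n)) (X : 'M[R]_(K, n)) : Prop :=
  inH X /\ exists D : 'M[R]_(p, K),
    forall (D' : 'M[R]_(p, K)) (X' : 'M[R]_(K, n)), inH X' ->
      frob2 (A - D *m X) <= frob2 (A - D' *m X').

Definition ratiocut_sol (n K : nat) (L : 'M[R]_n) (X : 'M[R]_(K, n)) : Prop :=
  inH X /\ forall X' : 'M[R]_(K, n), inH X' ->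
    \tr (X *m L *m X^T) <= \tr (X' *m L *m X'^T).

Definition Atilde (p n : nat) (A : 'M[R]_(p, n)) (beta : R) : 'M[R]_(1 + p, n) :=
  col_mx (const_mx (Num.sqrt beta)) A.

Definition laplacian (n : nat) (W : 'M[R]_n) : 'M[R]_n :=
  diag_mx (W *m ones n)^T - W.

End Defs.

(* Main.v *)
Require Import Defs.
From mathcomp Require Import all_boot all_order all_algebra.
From mathcomp Require Import reals.
From mathcomp Require Import ring lra.
Import Order.TTheory GRing.Theory Num.Theory.
Local Open Scope ring_scope.

Section S.
Variable R : realType.

Definition ip {m n} (M N : 'M[R]_(m, n)) := \tr (M *m N^T).

Lemma frob2E m n (M : 'M[R]_(m, n)) : frob2 M = ip M M.
Proof.
rewrite /frob2 /ip /mxtrace; apply: eq_bigr => i _; rewrite mxE.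
by apply: eq_bigr => j _; rewrite mxE expr2.
Qed.

Lemma ipC m n (M N : 'M[R]_(m, n)) : ip M N = ip N M.
Proof. by rewrite /ip -mxtrace_tr trmx_mul trmxK. Qed.

Lemma frob2_ge0 m n (M : 'M[R]_(m, n)) : 0 <= frob2 M.
Proof. by apply: sumr_ge0 => i _; apply: sumr_ge0 => j _; apply: sqr_ge0. Qed.

Lemma frob2B m n (M N : 'M[R]_(m, n)) :
  frob2 (M - N) = frob2 M - 2 * ip M N + frob2 N.
Proof.
rewrite !frob2E /ip (raddfB (@trmx _ _ _)) mulmxBl !mulmxBr !mxtraceD !raddfB /=.

rewrite !raddfN /=; have := ipC _ _ M N; rewrite /ip => ->. ring.
Qed.

Lemma kmeans_key p n K (A : 'M[R]_(p, n)) (D : 'M[R]_(p, K)) X :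
  X *m X^T = 1%:M ->
  frob2 (A - D *m X) = frob2 A - \tr (X *m (A^T *m A) *m X^T) + frob2 (D - A *m X^T).
Proof.
move=> XX.
rewrite !frob2B.
have h1 : frob2 (D *m X) = frob2 D.
  by rewrite !frob2E /ip trmx_mul mulmxA -(mulmxA D) XX mulmx1.
have h2 : ip A (D *m X) = ip D (A *m X^T).
  by rewrite ipC /ip trmx_mul trmxK mulmxA.
have h3 : frob2 (A *m X^T) = \tr (X *m (A^T *m A) *m X^T).
  by rewrite frob2E /ip mxtrace_mulC trmx_mul trmxK !mulmxA.
rewrite h1 h2 h3; ring.
Qed.

Section Ind.
Variables (K n : nat) (F : 'M[R]_(K, n)).
Hypothesis HF : is_indicator F.

Lemma indic_ge0 k i : 0 <= F k i.
Proof. by case: (HF.1 k i) => ->. Qed.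

Lemma indic_sq k i : F k i ^+ 2 = F k i.
Proof. by case: (HF.1 k i) => ->; rewrite ?expr0n ?expr1n. Qed.

Lemma indic_prod k l i : F k i * F l i = (k == l)%:R * F k i.
Proof.
case: eqP => [->|kl]; first by rewrite mul1r -expr2 indic_sq.
rewrite mul0r.
case: (HF.1 k i) => hk; first by rewrite hk mul0r.
case: (HF.1 l i) => hl; first by rewrite hl mulr0.
exfalso.
have : F k i + F l i <= \sum_(j < K) F j i.
  rewrite (bigD1 k) //= (bigD1 l) /=; last by apply/eqP => e; apply: kl.
  rewrite lerD2l lerDl; apply: sumr_ge0 => j _; exact: indic_ge0.
rewrite (HF.2 i) hk hl; lra.
Qed.

Lemma csizeE k : csize F k = \sum_i F k i.
Proof.
rewrite /csize !mxE; apply: eq_bigr => i _; rewrite !mxE -expr2 indic_sq //.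
Qed.

Lemma csize_ge0 k : 0 <= csize F k.
Proof. rewrite csizeE; apply: sumr_ge0 => i _; exact: indic_ge0. Qed.

Hypothesis Hnz : forall k, csize F k != 0.

Lemma normXX : normalized_of F *m (normalized_of F)^T = 1%:M.
Proof.
apply/matrixP => k l; rewrite !mxE.
transitivity (\sum_i (F k i * F l i) / (Num.sqrt (csize F k) * Num.sqrt (csize F l))).
  by apply: eq_bigr => i _; rewrite !mxE invfM mulrACA.
under eq_bigr => i _ do rewrite indic_prod -mulrA.
rewrite -mulr_sumr.
case: eqP => [<-|_]; last by rewrite mul0r.
rewrite mul1r -mulr_suml -csizeE -expr2 sqr_sqrtr ?csize_ge0 // divff //.
Qed.

Lemma normX1 : frob2 (normalized_of F *m ones R n) = n%:R.
Proof.
rewrite /frob2.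
transitivity (\sum_(k < K) csize F k).
  apply: eq_bigr => k _; rewrite big_ord1 !mxE.
  under eq_bigr => i _ do rewrite !mxE mulr1.
  rewrite -mulr_suml -csizeE exprMn exprVn sqr_sqrtr ?csize_ge0 //.
  by rewrite expr2 mulfK.
under eq_bigr => k _ do rewrite csizeE.
rewrite exchange_big /=.
under eq_bigr => i _ do rewrite (HF.2 i).
by rewrite sumr_const card_ord.
Qed.
End Ind.
End S.
Lemma inH_XX {R : realType} {K n} {X : 'M[R]_(K, n)} : inH X -> X *m X^T = 1%:M.
Proof. by case=> F [HF [Hnz ->]]; exact: normXX. Qed.

Lemma inH_X1 {R : realType} {K n} {X : 'M[R]_(K, n)} : inH X -> frob2 (X *m ones R n) = n%:R.
Proof. by case=> F [HF [Hnz ->]]; exact: normX1. Qed.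

Lemma lap_tr (R : realType) (p n K : nat) (A : 'M[R]_(p, n)) (beta : R) (X : 'M[R]_(K, n)) :
  A *m ones R n = 0 -> inH X ->
  \tr (X *m laplacian ((Atilde A beta)^T *m Atilde A beta) *m X^T) =
  Num.sqrt beta ^+ 2 * n%:R * K%:R - Num.sqrt beta ^+ 2 * n%:R
   - \tr (X *m (A^T *m A) *m X^T).
Proof.
move=> HA HX.
set S : 'M[R]_(1, n) := const_mx (Num.sqrt beta).
set c := Num.sqrt beta ^+ 2.
have hW : (Atilde A beta)^T *m Atilde A beta = S^T *m S + A^T *m A.
  by rewrite /Atilde tr_col_mx mul_row_col.
have hSS : S^T *m S = c *: (ones R n *m (ones R n)^T).
  by apply/matrixP => i j; rewrite !mxE !big_ord1 !mxE !mulr1 /c expr2.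
have hW1 : (Atilde A beta)^T *m Atilde A beta *m ones R n = const_mx (c * n%:R).
  rewrite hW mulmxDl -!mulmxA HA mulmx0 addr0; apply/matrixP => i0 j0.
  rewrite mxE big_ord1 [RHS]mxE !mxE; under eq_bigr => k _ do rewrite !mxE mulr1.
  by rewrite sumr_const card_ord /c expr2 -mulrA mulr_natr.
rewrite /laplacian hW1 trmx_const diag_const_mx hW hSS.
rewrite !mulmxBr !mulmxBl !mulmxDr !mulmxDl !mxtraceD !raddfN /= mul_mx_scalar.
rewrite mxtraceD -!scalemxAl -scalemxAr -scalemxAl !mxtraceZ (inH_XX HX) mxtrace1.
have h : \tr (X *m (ones R n *m (ones R n)^T) *m X^T) = n%:R.
  by rewrite -(inH_X1 HX) frob2E /ip trmx_mul !mulmxA.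
transitivity (c * n%:R * K%:R - (c * n%:R + \tr (X *m (A^T *m A) *m X^T))); last by ring.
congr (_ - (_ * _ + _)); exact: h.
Qed.

Lemma frob20 (R : realType) m n : frob2 (0 : 'M[R]_(m, n)) = 0.
Proof. by rewrite /frob2 big1 // => i _; rewrite big1 // => j _; rewrite mxE expr0n. Qed.

Theorem proposition2 (R : realType) (p n K : nat) (A : 'M[R]_(p, n)) (beta : R) :
  A *m ones R n = 0 ->
  (0 < K)%N ->
  (* beta = - min_{i,j} (A^T A)_{ij} *)
  (forall i j, - beta <= (A^T *m A) i j) ->
  (exists i j, (A^T *m A) i j = - beta) ->
  let W := (Atilde A beta)^T *m Atilde A beta in
  let L := laplacian W in
  forall X : 'M[R]_(K, n), kmeans_sol A X <-> ratiocut_sol L X.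
Proof.
move=> HA _ _ _ W L X.
set Q := fun Y : 'M[R]_(K, n) => \tr (Y *m (A^T *m A) *m Y^T).
have kiff : kmeans_sol A X <-> inH X /\ forall X', inH X' -> Q X' <= Q X.
  split.
    case=> HX [D HD]; split => // X' H'.
    have := HD (A *m X'^T) X' H'.
    rewrite (kmeans_key _ _ _ _ A D _ (inH_XX HX)) (kmeans_key _ _ _ _ A (A *m X'^T) _ (inH_XX H')) subrr frob20.
    have := frob2_ge0 _ _ _ (D - A *m X^T); rewrite /Q; lra.
  case=> HX HQ; split => //; exists (A *m X^T) => D' X' H'.
  rewrite (kmeans_key _ _ _ _ A D' _ (inH_XX H')) (kmeans_key _ _ _ _ A (A *m X^T) _ (inH_XX HX)) subrr frob20.
  have := frob2_ge0 _ _ _ (D' - A *m X'^T); have := HQ X' H'; rewrite /Q; lra.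
rewrite kiff; split.
  case=> HX HQ; split => // X' H'.
  rewrite /L /W !lap_tr //; have := HQ X' H'; rewrite /Q; lra.
case=> HX HQ; split => // X' H'.
have := HQ X' H'; rewrite /L /W !lap_tr //; rewrite /Q; lra.
Qed.
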